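(* Let $n>1$ be an odd integer with prime decomposition $n=p_1^{n_1}\cdots p_m^{n_m}$, let $A$ be a finite abelian group, and let $G$ be a group containing $A$ as a normal subgroup with $G/A\cong\mathbb{Z}_n$. If $[e]_\varphi$ is a subgroup of $G$ for every $\varphi\in{\rm Aut}\,G$, then $G$ is nilpotent of nilpotency class at most $\max\{n_1,\dots,n_m\}+1$.
   Context: For an automorphism $\varphi$ of $G$, $[e]_\varphi=\{z^{-1}\varphi(z)\mid z\in G\}$. A group has nilpotency class at most $c$ if $\gamma_{c+1}(G)=\{e\}$, where $\gamma_1(G)=G$, $\gamma_{k+1}(G)=[\gamma_k(G),G]$. *)

(* Defs.v *)
From HB Require Import structures.
From mathcomp Require Import all_boot all_order all_algebra all_fingroup all_solvable.
Set Implicit Arguments. Unset Strict Implicit. Unset Printing Implicit Defensive.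
Local Open Scope group_scope.

Definition e_class (gT : finGroupType) (G : {set gT}) (phi : {perm gT}) : {set gT} :=
  [set z^-1 * phi z | z in G].

(* Main.v *)
Require Import Defs.
From HB Require Import structures.
From mathcomp Require Import all_boot all_order all_algebra all_fingroup all_solvable.
Local Open Scope group_scope.

Theorem mainTheorem13 (n : nat) (gT : finGroupType) (G A : {group gT}) :
  1 < n -> odd n ->
  abelian A -> A <| G -> (G / A) \isog (Zp n) ->
  (forall phi : {perm gT}, phi \in Aut G -> group_set (e_class G phi)) ->
  'L_((\max_(p <- primes n) logn p n).+2)(G) = 1.
Proof.
move=> n_gt1 _ abA nsAG isoGA Hphi.
set M := \max_(p <- primes n) logn p n.
have sAG := normal_sub nsAG; have nAG := normal_norm nsAG.
have cycGA : cyclic (G / A).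
  rewrite (isog_cyclic isoGA). rewrite /= /Zp ifT //.
  apply/cyclicP; exists Zp1.
  exact: Zp_cycle.
have cardGA : #|G : A| = n by rewrite -card_quotient // (card_isog isoGA) card_Zp // ltnW.
have [g Gg decG] : exists2 g, g \in G & forall z, z \in G ->
    exists2 a, a \in A & exists i, z = a * g ^+ i.
  case/cyclicP: cycGA => x defx.
  have : x \in G / A by rewrite defx cycle_id.
  case/morphimP => g Ng Gg ex; exists g => // z Gz.
  have Nz := subsetP nAG z Gz.
  have : coset A z \in <[coset A g]> by rewrite -ex -defx mem_quotient.
  case/cycleP => i ezi; exists (z * (g ^+ i)^-1); last by exists i; rewrite mulgKV.
  apply: coset_idr; first by rewrite groupM ?groupV ?groupX.
  rewrite morphM ?morphV ?morphX ?groupV ?groupX //. by rewrite -[coset_morphism A z]/(coset A z) -[coset_morphism A g]/(coset A g) ezi mulgV.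
have cA : {in A &, forall x y, commute x y}.
  by move=> x y Ax Ay; exact: (centsP abA) x Ax y Ay.
have AJ : forall x z, x \in A -> z \in G -> x ^ z \in A.
  by move=> x z Ax Gz; rewrite memJ_norm // (subsetP nAG).
have AJg : forall x i, x \in A -> x ^ (g ^+ i) \in A.
  by move=> x i Ax; rewrite AJ ?groupX.
pose tau := fun x => [~ x, g].
have tauA : forall x, x \in A -> tau x \in A.
  by move=> x Ax; rewrite /tau commgEl groupM ?groupV // AJ.
have tauM : {in A &, forall x y, tau (x * y) = tau x * tau y}.
  move=> x y Ax Ay; rewrite /tau commMgJ; congr (_ * _).
  by apply/conjg_fixP/commgP; apply: cA => //; apply: tauA.
have tau1 : tau 1 = 1 by rewrite /tau comm1g.
have tauV : forall x, x \in A -> tau x^-1 = (tau x)^-1.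
  move=> x Ax; apply/eqP; rewrite eq_sym eq_invg_mul -tauM ?groupV //.
  by rewrite mulgV tau1.
have gX : forall i, commute g (g ^+ i) by move=> i; apply: commuteX.
have tauJ : forall x i, tau (x ^ g ^+ i) = tau x ^ g ^+ i.
  move=> x i; rewrite /tau conjRg; congr [~ _, _].
  by apply/esym/conjg_fixP/commgP; apply: gX.
have commAg : forall a w i, a \in A -> w \in A -> [~ a * g ^+ i, w] = [~ g ^+ i, w].
  move=> a w i Aa Aw; rewrite commMgJ.
  by rewrite (eqP (introT commgP (cA a w Aa Aw))) conj1g mul1g.
have commgA : forall x a i, x \in A -> a \in A -> [~ x, a * g ^+ i] = [~ x, g ^+ i].
  move=> x a i Ax Aa; rewrite commgMJ.
  by rewrite (eqP (introT commgP (cA x a Ax Aa))) conj1g mulg1.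
pose T := fun k => iter k (fun S : {set gT} => [set tau x | x in S]) (A : {set gT}).
have HT : forall k, [/\ T k \subset A, group_set (T k)
                       & forall x, x \in T k -> x ^ g \in T k].
  elim => [|k [sTA gTk jT]].
    by split => //; [exact: groupP | move=> x Ax; exact: AJ x g Ax Gg].
  have [T1 TM] := group_setP gTk.
  split.
  - by apply/subsetP => _ /imsetP [x Tx ->]; apply: tauA; exact: (subsetP sTA).
  - apply/group_setP; split; first by rewrite -tau1; apply: imset_f.
    move=> _ _ /imsetP[x Tx ->] /imsetP[y Ty ->].
    rewrite -tauM; try exact: (subsetP sTA).
    by apply: imset_f; apply: TM.
  - move=> _ /imsetP[x Tx ->].
    have -> : tau x ^ g = tau (x ^ g) by have := tauJ x 1%N; rewrite expg1.
    by apply: imset_f; apply: jT.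
have sTA : forall k, T k \subset A by move=> k; case: (HT k).
have gTk : forall k, group_set (T k) by move=> k; case: (HT k).
have jT : forall k x, x \in T k -> x ^ g \in T k by move=> k; case: (HT k).
pose TG k := Group (gTk k).
have jTX : forall k x i, x \in T k -> x ^ g ^+ i \in T k.
  move=> k x i Tx; elim: i => [|i IH]; first by rewrite expg0 conjg1.
  by rewrite expgSr conjgM; apply: jT.
have commTg : forall k x i, x \in T k -> [~ x, g ^+ i] \in T k.+1.
  move=> k x i Tx; elim: i => [|i IH].
    by rewrite expg0 commg1; exact: (group1 (TG k.+1)).
  rewrite expgSr commgMJ; apply: (@groupM _ (TG k.+1)).
    by apply: imset_f.
  by apply: jT.
have commTG : forall k x z, x \in T k -> z \in G -> [~ x, z] \in T k.+1.
  move=> k x z Tx Gz; have [a Aa [i ->]] := decG z Gz.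
  by rewrite commgA //; [apply: commTg | apply: (subsetP (sTA k))].
have commHG : forall (H : {set gT}) k, H \subset T k -> [~: H, G] \subset T k.+1.
  move=> H k sHT; change ([~: H, G] \subset TG k.+1).
  rewrite /commg gen_subG; apply/subsetP => _ /imset2P[x z Hx Gz ->].
  by apply: commTG => //; apply: (subsetP sHT).
have L2 : [~: G, G] \subset T 1%N.
  change ([~: G, G] \subset TG 1%N).
  rewrite /commg gen_subG; apply/subsetP => _ /imset2P[z1 z2 Gz1 Gz2 ->].
  have [a Aa [i ->]] := decG z1 Gz1.
  rewrite commMgJ; apply: (@groupM _ (TG 1%N)).
    by apply: jTX; apply: (commTG 0%N).
  rewrite -invgR; apply: (@groupVr _ (TG 1%N)).
  have [b Ab [j ->]] := decG z2 Gz2.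
  rewrite commMgJ (eqP (introT commgP (commuteX2 j i (commute_refl g)))) mulg1.
  by apply: jTX; apply: (commTg 0%N).
have Lk : forall k, 'L_k.+2(G) \subset T k.+1.
  elim => [|k IH]; first by rewrite lcnSn lcn1.
  by rewrite lcnSn; apply: commHG.
have Titer : forall k x, x \in T k -> exists2 a, a \in A & x = iter k tau a.
  elim => [|k IH] x; first by exists x.
  case/imsetP => y Ty ->; have [a Aa ->] := IH y Ty; by exists a.
suff main : forall a, a \in A -> iter M.+1 tau a = 1.
  apply/trivgP; apply/subsetP => x Lx.
  have [a Aa ->] := Titer _ x (subsetP (Lk M) x Lx).
  by rewrite main //; exact: group1.
have iterA : forall k x, x \in A -> iter k tau x \in A.
  by elim => [|k IH] x Ax //=; apply: tauA; apply: IH.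
have iterM : forall k, {in A &, forall x y, iter k tau (x * y) = iter k tau x * iter k tau y}.
  elim => [|k IH] x y Ax Ay //=; by rewrite IH // tauM ?iterA.
have iter1 : forall k, iter k tau 1 = 1 by elim => [|k IH] //=; rewrite IH tau1.
suff core : forall p y, prime p -> y \in A -> p.-elt y -> iter (logn p n).+1 tau y = 1.
  move=> a Aa; rewrite -(prod_constt a).
  set P := \prod_(_ <= _ < _) _.
  suff [_ ->] : P \in A /\ iter M.+1 tau P = 1 by [].
  apply: (big_ind (fun x => x \in A /\ iter M.+1 tau x = 1)).
  - by split; [exact: group1 | exact: iter1].
  - move=> x y [Ax ex] [Ay ey]; split; first by rewrite groupM.
    by rewrite iterM // ex ey mulg1.
  move=> p _.
  have Aap : a.`_p \in A.
    by apply: (subsetP _ _ (cycle_constt p a)); rewrite cycle_subG.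
  split => //; case: (boolP (prime p)) => pp.
    have ep := core p _ pp Aap (p_elt_constt p a).
    have le : logn p n <= M.
      case: (boolP (p \in primes n)) => pn; first by apply: leq_bigmax_seq.
      have : ~~ (0 < logn p n) by rewrite logn_gt0.
      by rewrite -leqNgt leqn0 => /eqP ->.
    have -> : M.+1 = (M - logn p n) + (logn p n).+1 by rewrite addnS subnK.
    by rewrite iterD ep iter1.
  have -> : a.`_p = 1; last exact: iter1.
  apply/constt1P; apply/pnatP; first exact: order_gt0.
  move=> q pq _; rewrite !inE /=; apply: contraNneq pp => <-; exact: pq.
move=> p y pp; move: y.
pose S := fun w => [set [~ z, w] | z in G].
have gS : forall w, w \in A -> group_set (S w).
  move=> w Aw; have Gw := subsetP sAG w Aw.
  have Nw : w \in 'N(G) by rewrite (subsetP (normG G)).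
  suff <- : e_class G (conj_aut G w) = S w.
    by apply: Hphi; apply: (subsetP (Aut_conj_aut G G)); apply: mem_morphim.
  rewrite /e_class; apply: eq_in_imset => z Gz.
  by rewrite norm_conj_autE // commgEl.
have S1 : forall w, 1 \in S w by move=> w; rewrite -(comm1g w); apply: imset_f.
have SA : forall w, w \in A -> S w \subset A.
  move=> w Aw; apply/subsetP => _ /imsetP[z Gz ->].
  by rewrite commgEr groupM ?AJ ?groupV.
have Spe : forall w x, w \in A -> p.-elt w -> x \in S w -> p.-elt x.
  move=> w _ Aw pw /imsetP[z Gz ->]; rewrite commgEr.
  apply: p_eltM; last by [].
    by apply: cA; rewrite ?AJ ?groupV.
  by rewrite p_eltJ p_eltV.
have Sp : forall w, w \in A -> p.-elt w -> p.-nat #|S w|.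
  move=> w Aw pw; change (p.-group (Group (gS w Aw))); apply/pgroupP => q pq qd.
  have [x Sx ox] := Cauchy pq qd.
  by have := Spe w x Aw pw Sx; rewrite /p_elt ox pnatE.
have Snorm : forall w, w \in A -> G \subset 'N(S w).
  move=> w Aw; apply/normsP => v Gv; apply/eqP.
  rewrite eqEcard cardJg leqnn andbT; apply/subsetP => u.
  rewrite mem_conjg => /imsetP[z Gz ez].
  have -> : u = [~ z * v, w] * [~ v, w]^-1.
    by rewrite commMgJ -ez conjgKV mulgK.
  apply: (@groupM _ (Group (gS w Aw))); first by apply: imset_f; rewrite groupM.
  by apply: (@groupVr _ (Group (gS w Aw))); apply: imset_f.
have Scard : forall w, #|S w| = #|G : 'C_G[w]|.
  move=> w; rewrite index_cent1.
  have -> : S w = [set x^-1 * w | x in w ^: G].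
    rewrite /class -imset_comp; apply: eq_imset => z /=.
    by rewrite commgEr conjVg.
  by apply: card_in_imset => x1 x2 _ _ /mulIg/invg_inj.
have Sdiv : forall w, w \in A -> #|S w| %| n.
  move=> w Aw; rewrite Scard -cardGA; apply: indexgS.
  by rewrite subsetI sAG sub_cent1 (subsetP abA).
have derA : G^`(1) \subset A by apply: der1_min => //; apply: cyclic_abelian.
have gC : forall w, w \in A -> g ^+ #|S w| \in 'C[w].
  move=> w Aw.
  have sAC : A \subset 'C_G[w] by rewrite subsetI sAG sub_cent1 (subsetP abA).
  have nsC : 'C_G[w] <| G by apply: sub_der1_normal; [apply: subset_trans sAC | apply: subsetIl].
  have nCG := normal_norm nsC.
  have := expg_cardG (mem_quotient 'C_G[w] Gg).
  rewrite card_quotient // -morphX ?(subsetP nCG) // -Scard => /coset_idr.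
  by move/(_ (groupX _ (subsetP nCG g Gg)))/setIP => [].
have uC : forall w, w \in A -> p.-elt w -> w ^ g.`_p^' = w.
  move=> w Aw pw; set u := g.`_p^'.
  have cop : coprime #[u] #|S w|.
    by apply: (pnat_coprime (p_elt_constt _ g)); rewrite pnatNK; apply: Sp.
  have uu : u \in <[u ^+ #|S w|]>.
    have gen : generator <[u]> (u ^+ #|S w|) by rewrite generator_coprime.
    by rewrite -(eqP gen) cycle_id.
  have uCw : u ^+ #|S w| \in 'C[w].
    have /cycleP[k ->] : u \in <[g]> := cycle_constt p^' g.
    by rewrite -expgM mulnC expgM groupX // gC.
  have /cent1P cuw : u \in 'C[w] by apply: (subsetP _ _ uu); rewrite cycle_subG.
  by apply/conjg_fixP/commgP; exact/esym.
have fixS : forall w, w \in A -> p.-elt w -> 1 < #|S w| ->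
    exists2 s, s \in S w & (s != 1) && (tau s == 1).
  move=> w Aw pw gt1.
  have pP : p.-group <[g.`_p]> by rewrite /pgroup -orderE; apply: p_elt_constt.
  have Ggp : g.`_p \in G.
    by apply: (subsetP _ _ (cycle_constt p g)); rewrite cycle_subG.
  have acts : [acts <[g.`_p]>, on S w | 'J].
    by rewrite astabsJ cycle_subG (subsetP (Snorm w Aw)).
  have md := pgroup_fix_mod pP acts.
  have [k ek] := p_natP (Sp w Aw pw).
  have k_gt0 : 0 < k by case: k ek gt1 => [|k] // ->; rewrite expn0.
  have pF : p %| #|'Fix_(S w | 'J)(<[g.`_p]>)|.
    by rewrite /dvdn -md ek -/(dvdn p (p ^ k)) dvdn_exp.
  have F1 : 1 \in 'Fix_(S w | 'J)(<[g.`_p]>).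
    by rewrite inE S1; apply/afixP => a _; rewrite /= conj1g.
  have : ~~ ('Fix_(S w | 'J)(<[g.`_p]>) \subset [set 1]).
    apply/negP => /subset_leq_card; rewrite cards1; apply/negP; rewrite -ltnNge.
    apply: leq_trans (prime_gt1 pp) _; apply: dvdn_leq => //.
    by apply/card_gt0P; exists 1.
  case/subsetPn => s /setIP[Ss /afixP fs]; rewrite inE => ns1.
  exists s => //; rewrite ns1 /=.
  have As : s \in A := subsetP (SA w Aw) s Ss.
  rewrite /tau commgEl -(consttC p g) conjgM.
  have -> : s ^ g.`_p = s by apply: (fs (g.`_p)); apply: cycle_id.
  by rewrite uC ?mulVg // (Spe w s Aw pw Ss).
have subS : forall w, w \in A -> S (tau w) \subset [set tau x | x in S w].
  move=> w Aw; apply/subsetP => _ /imsetP[z Gz ->].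
  have [a Aa [i ->]] := decG z Gz.
  rewrite commAg ?tauA //.
  have -> : [~ g ^+ i, tau w] = tau [~ g ^+ i, w].
    by rewrite !commgEr tauM ?AJg ?groupV // tauJ tauV.
  by apply: imset_f; apply: imset_f; apply: groupX.
have leS : forall w, w \in A -> #|S (tau w)| <= #|S w|.
  by move=> w Aw; apply: leq_trans (subset_leq_card (subS w Aw)) (leq_imset_card _ _).
have ltS : forall w, w \in A -> p.-elt w -> 1 < #|S w| -> #|S (tau w)| < #|S w|.
  move=> w Aw pw gt1; have [s Ss /andP[ns1 ts1]] := fixS w Aw pw gt1.
  apply: leq_ltn_trans (subset_leq_card (subS w Aw)) _.
  rewrite ltn_neqAle leq_imset_card andbT; apply/negP => /imset_injP inj.
  have := inj s 1 Ss (S1 w); rewrite (eqP ts1) tau1 => /(_ erefl) /eqP.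
  by rewrite (negbTE ns1).
have card1 : forall w, w \in A -> #|S w| = 1%N -> tau w = 1.
  move=> w Aw c1.
  have := card_le1_trivg (G := Group (gS w Aw)); rewrite /= c1 => /(_ isT) St.
  have : [~ g, w] \in S w by apply: imset_f.
  rewrite St inE => /eqP e; by rewrite /tau -invgR e invg1.
have ind : forall j w, w \in A -> p.-elt w -> #|S w| %| p ^ j -> iter j.+1 tau w = 1.
  elim => [|j IH] w Aw pw dw.
    by apply: card1 => //; apply/eqP; rewrite -dvdn1 -(expn0 p).
  have Aw' := tauA w Aw.
  have pw' : p.-elt (tau w).
    rewrite /tau commgEl; apply: p_eltM; last by rewrite p_eltJ.
      by apply: cA; rewrite ?AJ ?groupV.
    by rewrite p_eltV.
  have [k ek] := p_natP (Sp _ Aw' pw').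
  rewrite iterSr; apply: IH => //; rewrite ek dvdn_exp2l //.
  have hS : #|S w| <= p ^ j.+1 by apply: dvdn_leq => //; rewrite expn_gt0 prime_gt0.
  case: (ltnP 1 #|S w|) => h.
    rewrite -ltnS -(ltn_exp2l _ _ (prime_gt1 pp)) -ek.
    by apply: leq_trans (ltS w Aw pw h) hS.
  have : p ^ k < p ^ 1.
    rewrite expn1 -ek; apply: leq_ltn_trans (leS w Aw) _.
    exact: leq_ltn_trans h (prime_gt1 pp).
  by rewrite ltn_exp2l ?prime_gt1 // ltnS leqn0 => /eqP ->.
move=> y Ay py; apply: ind => //.
have [k ek] := p_natP (Sp y Ay py).
rewrite ek dvdn_exp2l // -(pfactor_dvdn _ pp) ?(ltnW n_gt1) // -ek.
exact: Sdiv.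
Qed.
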